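(* Let $A\subset\mathbb T^2$ be a measurable set and $\Gamma_A:=\{\gamma\in\Gamma:\ \mathscr L^1(\{t\in[0,T]:\gamma(t)\in A\})>0\}$. Then $\mathscr L^2(A)=0$ if and only if $\eta(\Gamma_A)=0$.
   Context: $T>0$, $\mathbb T^2=\mathbb R^2/\mathbb Z^2$, $b\colon\mathbb T^2\to\mathbb R^2$ is a bounded, everywhere defined Borel vector field with $b\in\mathrm{BV}(\mathbb T^2)$, nearly incompressible with density $\rho$: $\ln\rho\in L^\infty((0,T)\times\mathbb T^2)$ and $\partial_t\rho+\mathrm{div}(\rho b)=0$ in $\mathscr D'((0,T)\times\mathbb T^2)$. $\Gamma:=C([0,T];\mathbb T^2)$, $e_t(\gamma)=\gamma(t)$. $\eta$ is a positive finite Borel measure on $\Gamma$, concentrated on curves with $\gamma(t)=\gamma(0)+\int_0^tb(\gamma(\tau))d\tau$, such that $(e_t)_\#\eta=\rho(t,\cdot)\mathscr L^2$ for every $t\in[0,T]$. *)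

(* Defs.v *)
From HB Require Import structures.
From mathcomp Require Import all_boot all_order all_algebra.
From mathcomp Require Import all_classical all_reals all_analysis.
Set Implicit Arguments. Unset Strict Implicit. Unset Printing Implicit Defensive.
Import Order.TTheory GRing.Theory Num.Theory.
Import numFieldNormedType.Exports.
Local Open Scope classical_set_scope.
Local Open Scope ring_scope.

Section Torus.
Variable R : realType.

(* The torus T^2 = R^2/Z^2 is represented by its fundamental domain
   Q = [0,1) x [0,1) inside R * R. *)
Definition Qdom : set (R * R) := `[0%R, 1%R[ `*` `[0%R, 1%R[.

Definition fracR (a : R) : R := a - (Num.floor a)%:~R.
Definition torus_proj (v : R * R) : R * R := (fracR v.1, fracR v.2).

Definition dist1 (a : R) : R := Num.min (fracR a) (1 - fracR a).
Definition tdist (x y : R * R) : R :=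
  Num.max (dist1 (x.1 - y.1)) (dist1 (x.2 - y.2)).

Definition leb2 := ((@lebesgue_measure R) \x (@lebesgue_measure R))%E.
Definition leb3 := ((@lebesgue_measure R) \x leb2)%E.

Fixpoint iter_dir (V : normedModType R) (f : V -> R) (vs : seq V) : V -> R :=
  if vs is v :: vs' then fun x => 'D_v (iter_dir f vs') x else f.
Definition smooth (V : normedModType R) (f : V -> R) : Prop :=
  forall vs : seq V, continuous (iter_dir f vs) /\
    forall (v x : V), derivable (iter_dir f vs) x v.

(* Z^2-periodic functions on R^2, i.e. functions on T^2 *)
Definition periodic2 (f : R * R -> R) : Prop :=
  forall x : R * R, f (x.1 + 1, x.2) = f x /\ f (x.1, x.2 + 1) = f x.

(* b in BV(T^2): finite total variation of the distributional derivative,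
   tested against smooth T^2-periodic 2x2 matrix fields phi with |phi| <= 1 *)
Definition BV_torus (b : R * R -> R * R) : Prop :=
  exists C : R, forall p11 p12 p21 p22 : R * R -> R,
    smooth p11 -> smooth p12 -> smooth p21 -> smooth p22 ->
    periodic2 p11 -> periodic2 p12 -> periodic2 p21 -> periodic2 p22 ->
    (forall x, p11 x ^+ 2 + p12 x ^+ 2 + p21 x ^+ 2 + p22 x ^+ 2 <= 1) ->
    (\int[leb2]_(x in Qdom)
       ((b x).1 * ('D_(1, 0) p11 x + 'D_(0, 1) p12 x)
      + (b x).2 * ('D_(1, 0) p21 x + 'D_(0, 1) p22 x))%:E <= C%:E)%E.

Definition test_fun (T : R) (phi : R * (R * R) -> R) : Prop :=
  smooth phi /\
  (forall t x, phi (t, (x.1 + 1, x.2)) = phi (t, x) /\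
               phi (t, (x.1, x.2 + 1)) = phi (t, x)) /\
  exists a c : R, 0 < a /\ c < T /\
    forall t x, (t < a \/ c < t) -> phi (t, x) = 0.

(* d_t rho + div(rho b) = 0 in D'((0,T) x T^2) *)
Definition continuity_eq (T : R) (b : R * R -> R * R)
    (rho : R * (R * R) -> R) : Prop :=
  forall phi, test_fun T phi ->
    (\int[leb3]_(z in `]0%R, T[ `*` Qdom)
      (rho z * ('D_(1, (0, 0)) phi z
               + (b z.2).1 * 'D_(0, (1, 0)) phi z
               + (b z.2).2 * 'D_(0, (0, 1)) phi z))%:E = 0)%E.

Definition ln_Linfty (T : R) (rho : R * (R * R) -> R) : Prop :=
  measurable_fun (`]0%R, T[ `*` Qdom) rho /\
  exists C : R, {ae leb3, forall z, (`]0%R, T[ `*` Qdom) z ->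
                  0 < rho z /\ `|ln (rho z)| <= C}.

(* continuous curves [0,T] -> T^2, represented as functions R -> Q that are
   constant outside [0,T] (so they are determined by their values on [0,T]) *)
Definition clampT (T t : R) : R := Num.max 0 (Num.min t T).
Definition curve_prop (T : R) (f : R -> R * R) : Prop :=
  (forall t, Qdom (f t)) /\ (forall t, f t = f (clampT T t)) /\
  (forall t (e : R), 0 < e -> exists2 d : R, 0 < d &
     forall s, `|s - t| < d -> tdist (f s) (f t) < e).

Lemma curve_prop_cst (T : R) : curve_prop T (fun=> (0, 0)).
Proof.
split; first by move=> t; split; rewrite /= in_itv /= lexx ltr01.
split=> // t e e0; exists 1 => // s _.
by rewrite /tdist /dist1 /fracR subrr floor0 /= subr0 ?minxx ?maxxx
  ?(le_lt_trans _ e0) // ge_min lexx.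
Qed.

Definition curve (T : R) := {f : R -> R * R | curve_prop T f}.
HB.instance Definition _ T := gen_eqMixin (curve T).
HB.instance Definition _ T := gen_choiceMixin (curve T).
HB.instance Definition _ T :=
  isPointed.Build (curve T) (exist _ (fun=> (0, 0)) (curve_prop_cst T)).

Definition ev (T : R) (t : R) (g : curve T) : R * R := sval g t.

(* Borel sigma-algebra of Gamma = C([0,T];T^2): generated by the e_t *)
Definition cyl_gen (T : R) : set (set (curve T)) :=
  [set @ev T t @^-1` B | t in `[0%R, T] & B in [set B : set (R * R) | measurable B]].
Definition Gamma (T : R) := g_sigma_algebraType (@cyl_gen T).

Definition integral_curve (T : R) (b : R * R -> R * R) (g : R -> R * R) :=
  forall t, 0 <= t <= T ->
    g t = torus_proj ((g 0).1 + Rintegral lebesgue_measure `[0%R, t] (fun tau => (b (g tau)).1),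
                      (g 0).2 + Rintegral lebesgue_measure `[0%R, t] (fun tau => (b (g tau)).2)).

Definition Gamma_A (T : R) (A : set (R * R)) : set (Gamma T) :=
  [set g | (0 < (@lebesgue_measure R) [set s : R | (0 <= s <= T)%R /\ A (ev s g)])%E].

End Torus.

(* Main.v *)
Require Import Defs.
From HB Require Import structures.
From mathcomp Require Import all_boot all_order all_algebra.
From mathcomp Require Import all_classical all_reals all_analysis.
From mathcomp Require Import lra measurable_realfun.
Import Order.TTheory GRing.Theory Num.Theory.
Import numFieldNormedType.Exports.
Local Open Scope classical_set_scope.
Local Open Scope ring_scope.

Lemma dist1_close {R : realType} (x y e : R) : 0 < e -> 0 <= x -> x < 1 -> e <= y -> y <= 1 - e ->
  dist1 (x - y) < e -> `|x - y| < e.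
Proof.
move=> e0 x0 x1 ey ye; rewrite /dist1 /fracR.
have [d0|d0] := leP 0 (x - y).
- have -> : Num.floor (x - y) = 0.
    by apply: floor_def; rewrite d0 /= add0r rmorph1; lra.
  rewrite rmorph0 subr0 ger0_norm // gt_min => /orP[//|]; lra.
- have -> : Num.floor (x - y) = -1.
    by apply: floor_def; rewrite addNr /= rmorph0 mulrN1z d0 andbT; lra.
  rewrite (_ : (-1)%:~R = -1 :> R) ?mulrN1z // ltr0_norm // gt_min => /orP[]; lra.
Qed.
Arguments dist1_close {R x y e}.

Lemma dist1N {R : realType} (z : R) : dist1 (- z) = dist1 z.
Proof.
rewrite /dist1 /fracR.
have := floor_itv z; set f := Num.floor z => /andP[h1 h2].
rewrite intrD in h2.
have [e|ne] := eqVneq z f%:~R.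
- have -> : Num.floor (- z) = - f.
    apply: floor_def; rewrite e mulrNz intrD; lra.
  rewrite mulrNz e; congr Num.min; lra.
- have -> : Num.floor (- z) = - f - 1.
    apply: floor_def.
    have : f%:~R < z by rewrite lt_def h1 andbT; apply: contra_neq ne => ->.
    rewrite intrD !intrB mulrNz; lra.
  rewrite intrB mulrNz minC; congr Num.min; lra.
Qed.
Lemma inv_lt {R : realType} (e : R) : 0 < e -> exists k : nat, (k.+1%:R)^-1 < e.
Proof.
move=> e0; exists (Num.truncn (e^-1)).
rewrite -(invrK e) ltf_pV2 ?posrE ?invr_gt0 ?ltr0Sn //.
by rewrite invrK; exact: truncnS_gt.
Qed.
Definition qn (n : nat) : rat := odflt 0 (pickle_inv n).
Lemma qnP (q : rat) : qn (pickle q) = q.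
Proof. by rewrite /qn pickleK_inv. Qed.

Lemma rat_near {R : realType} (t e : R) : 0 < e -> exists n, `|ratr (qn n) - t| < e.
Proof.
move=> e0.
have [s [hs [q _ qs]]] := @dense_rat R (ball t e) (ex_intro _ t (ballxx t e0)) (ball_open _ _).
exists (pickle q); rewrite qnP qs distrC.
by move: hs; rewrite /ball /=.
Qed.

Definition Wk {R : realType} (p : R * R -> R) (a : R) (k : nat) : set (R * R) :=
  [set x | Qdom x /\ a + (k.+1%:R)^-1 <= p x /\ p x <= 1 - (k.+1%:R)^-1].

Lemma key_equiv {R : realType} (T : R) (p : R * R -> R)
  (hp1 : forall x, Qdom x -> 0 <= p x /\ p x < 1)
  (hp2 : forall x y, dist1 (p x - p y) <= tdist x y)
  (a : R) (a0 : 0 <= a) (f : R -> R * R) (hf : curve_prop T f) (t : R) :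
  a < p (f t) <-> exists k m : nat, forall n,
     `|ratr (qn n) - t| < (m.+1%:R)^-1 -> Wk p a k (f (ratr (qn n))).
Proof.
have [hQ [_ hc]] := hf.
split.
- move=> ay.
  have [y0 y1] := hp1 _ (hQ t).
  have [k hk] : exists k : nat, (k.+1%:R)^-1 < Num.min (p (f t) - a) (1 - p (f t)) / 2.
    by apply: inv_lt; rewrite divr_gt0 // lt_min; apply/andP; split; lra.
  move: hk; set dl := (k.+1%:R)^-1 => hk.
  have dl0 : 0 < dl by rewrite invr_gt0 ltr0Sn.
  have [hk1 hk2] : dl < (p (f t) - a) / 2 /\ dl < (1 - p (f t)) / 2.
    have m1 : Num.min (p (f t) - a) (1 - p (f t)) <= p (f t) - a by rewrite ge_min lexx.
    have m2 : Num.min (p (f t) - a) (1 - p (f t)) <= 1 - p (f t) by rewrite ge_min lexx orbT.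
    split; lra.
  have [d d0 hd] := hc t dl dl0.
  have [m hm] := inv_lt _ d0.
  exists k, m => n hn.
  have hq := hd _ (lt_trans hn hm).
  have [x0 x1] := hp1 _ (hQ (ratr (qn n))).
  have := dist1_close dl0 x0 x1 _ _ (le_lt_trans (hp2 _ _) hq).
  move=> /(_ ltac:(lra) ltac:(lra)) hab.
  split; first exact: hQ.
  move: hab; rewrite ltr_norml /Wk -/dl => /andP[h1 h2]; split; lra.
- move=> [k [m hkm]].
  pose dl : R := (k.+1%:R)^-1.
  have dl0 : 0 < dl by rewrite invr_gt0 ltr0Sn.
  have [d d0 hd] := hc t (dl / 2) ltac:(lra).
  have im0 : 0 < (m.+1%:R : R)^-1 by rewrite invr_gt0 ltr0Sn.
  have [n hn] := rat_near t _ (ltac:(by rewrite lt_min d0 im0) : 0 < Num.min d (m.+1%:R)^-1).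
  move: hn; rewrite lt_min => /andP[hn1 hn2].
  have [_ [w1 w2]] := hkm n hn2; rewrite -/dl in w1 w2.
  have hq := hd _ hn1.
  have [y0 y1] := hp1 _ (hQ t).
  have hq' : dist1 (p (f t) - p (f (ratr (qn n)))) < dl / 2.
    by rewrite -dist1N opprB; exact: (le_lt_trans (hp2 _ _) hq).
  have := @dist1_close R (p (f t)) (p (f (ratr (qn n)))) (dl / 2) ltac:(lra) y0 y1 ltac:(lra) ltac:(lra) hq'.
  rewrite ltr_norml => /andP[h1 h2]; lra.
Qed.

Section Meas.
Variable R : realType.
Variable T : R.
Hypothesis T0 : 0 < T.

Lemma clampT_in (s : R) : 0 <= clampT T s <= T.
Proof.
rewrite /clampT le_max lexx /= ge_max (ltW T0) /= ge_min lexx orbT.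
by [].
Qed.

Lemma cyl_meas (s : R) (B : set (R * R)) : measurable B ->
  measurable [set g : Gamma T | B (ev s g)].
Proof.
move=> mB; apply: sub_sigma_algebra.
exists (clampT T s); first by rewrite /= in_itv /= clampT_in.
exists B => //; apply/seteqP; split => g /=; rewrite /ev;
  by have [_ [<- _]] := proj2_sig g.
Qed.

Lemma coord_meas (p : R * R -> R) (mp : measurable_fun setT p)
  (hp1 : forall x, Qdom x -> 0 <= p x /\ p x < 1)
  (hp2 : forall x y, dist1 (p x - p y) <= tdist x y) :
  measurable_fun setT (fun z : R * Gamma T => p (ev z.1 z.2)).
Proof.
apply: (measurability _ (measurable_realfun.RGenOInfty.measurableE R)) => //.
move=> _ [_ [a ->] <-]; rewrite setTI.
have [a0|a0] := ltP a 0.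
  rewrite (_ : _ @^-1` _ = setT) //; apply/seteqP; split => // z _ /=.
  rewrite in_itv /= andbT; apply: (lt_le_trans a0).
  by have [/(_ z.1)/hp1[]] := proj2_sig z.2.
pose Bset (n m : nat) := [set t : R | ~ (`|ratr (qn n) - t| < (m.+1%:R)^-1)].
pose Cset (n k : nat) := [set g : Gamma T | Wk p a k (ev (ratr (qn n)) g)].
rewrite (_ : _ @^-1` _ = \bigcup_k \bigcup_m \bigcap_n
   ((Bset n m `*` setT) `|` (setT `*` Cset n k))); last first.
  apply/seteqP; split => z /=; rewrite in_itv /= andbT.
  - move=> /(key_equiv T p hp1 hp2 a a0 _ (proj2_sig z.2) z.1) [k [m hkm]].
    exists k => //; exists m => // n _ /=.
    have [h|h] := pselect (`|ratr (qn n) - z.1| < (m.+1%:R)^-1).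
    + by right; split => //; exact: hkm.
    + by left.
  - move=> [k _ [m _ hn]].
    apply/(key_equiv T p hp1 hp2 a a0 _ (proj2_sig z.2) z.1); exists k, m => n hnm.
    by case: (hn n I) => -[] //.
apply: bigcupT_measurable => k; apply: bigcupT_measurable => m.
apply: bigcapT_measurable => n; apply: measurableU; apply: measurableX => //.
- apply: measurableC; rewrite /Bset.
  have := @measurable_realfun.open_measurable R (ball (ratr (qn n) : R) (m.+1%:R)^-1) (ball_open _ _).
  congr (measurable _); apply/seteqP; split => t /=; rewrite /ball /=.
- rewrite /Cset; apply: cyl_meas.
  have mQ : measurable (@Qdom R) by apply: measurableX; exact: measurable_itv.
  rewrite /Wk (_ : [set x | _] = @Qdom R `&` (setT `&` p @^-1` `[a + (k.+1%:R)^-1, 1 - (k.+1%:R)^-1])).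
    by apply: measurableI => //; apply: mp => //; exact: measurable_itv.
  by apply/seteqP; split => x /=; rewrite in_itv /=; [move=> [? /andP ?]| move=> [? [_ /andP ?]]].
Qed.

Lemma ev_meas : measurable_fun setT (fun z : R * Gamma T => ev z.1 z.2).
Proof.
apply/measurable_fun_pairP; split.
- apply: (@coord_meas fst) => //.
  + by move=> [x y] [/=]; rewrite in_itv /= => /andP[].
  + by move=> x y; rewrite /tdist le_max lexx.
- apply: (@coord_meas snd) => //.
  + by move=> [x y] [_ /=]; rewrite in_itv /= => /andP[].
  + by move=> x y; rewrite /tdist le_max lexx orbT.
Qed.

Definition Sset (A : set (R * R)) : set (R * Gamma T) :=
  [set z | (0 <= z.1 <= T) /\ A (ev z.1 z.2)].

Lemma Sset_meas A : measurable A -> measurable (Sset A).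
Proof.
move=> mA.
rewrite (_ : Sset A = (`[0, T] `*` setT) `&` (setT `&` (fun z : R * Gamma T => ev z.1 z.2) @^-1` A)).
  apply: measurableI; first by apply: measurableX => //; exact: measurable_itv.
  exact: ev_meas.
by apply/seteqP; split => z; rewrite /Sset /= in_itv /=; [move=> [h1 h2]|move=> [[h1 _] [_ h2]]].
Qed.

End Meas.

Section Integrals.
Local Open Scope ereal_scope.
Context d (X : measurableType d) (R : realType) (mu : {measure set X -> \bar R}).

Lemma le_integral_nomeas (D : set X) (f g : X -> \bar R) :
  (forall x, D x -> 0 <= f x) -> (forall x, D x -> f x <= g x) ->
  \int[mu]_(x in D) f x <= \int[mu]_(x in D) g x.
Proof.
move=> f0 fg.
have g0 : forall x, D x -> 0 <= g x by move=> x Dx; exact: le_trans (f0 _ Dx) (fg _ Dx).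
rewrite !ge0_integralE //; apply: le_ereal_sup => _ [h hh <-]; exists h => //= x.
apply: (le_trans (hh x)); rewrite /patch; case: ifPn => // /set_mem; exact: fg.
Qed.

Lemma null_integral (D : set X) (f : X -> \bar R) : measurable D -> mu D = 0 ->
  \int[mu]_(x in D) f x = 0.
Proof.
move=> mD D0.
have H (g : X -> \bar R) : (forall x, 0 <= g x) -> \int[mu]_(x in D) g x = 0.
  move=> g0; apply/eqP; rewrite eq_le integral_ge0 // andbT.
  apply: (le_trans (@le_integral_nomeas D g (cst +oo) _ _)) => //.
    by move=> x _; rewrite leey.
  by rewrite integral_cst // D0 mule0.
by rewrite integralE !H ?subee.
Qed.

Lemma integral_eq0_pos (D : set X) (f : X -> \bar R) : measurable D ->
  measurable_fun D f -> (forall x, D x -> 0 <= f x) ->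
  \int[mu]_(x in D) f x = 0 -> mu (D `&` [set x | 0 < f x]) = 0.
Proof.
move=> mD mf f0 i0.
have : \int[mu]_(x in D) `|f x| = 0.
  by rewrite -i0; apply: eq_integral => x /set_mem Dx; rewrite gee0_abs // f0.
move/(ae_eq_integral_abs mu mD mf) => [N [mN N0 hN]].
apply/eqP; rewrite eq_le measure_ge0 andbT -[X in _ <= X]N0; apply: le_measure => //.
- by rewrite inE; exact: emeasurable_fun_o_infty.
- by rewrite inE.
- move=> x [Dx fx]; apply: hN => /= /(_ Dx) hf.
  by move: fx => /=; rewrite hf ltxx.
Qed.

End Integrals.
Arguments integral_eq0_pos {d X R} mu {D f}.
Arguments null_integral {d X R} mu {D f}.
Arguments le_integral_nomeas {d X R} mu {D f g}.

HB.instance Definition _ (R : realType) := Measure.on (@leb2 R).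

Lemma leb2_sigma_finite (R : realType) : sigma_finite setT (@leb2 R).
Proof.
have /sigma_finiteP[F [TF ndF Foo]] := sigma_finiteT (@lebesgue_measure R).
exists (fun n => F n `*` F n).
  rewrite -setXTT TF predeqE => -[x y]; split.
    move=> [/= [n _ Fnx] [k _ Gky]]; exists (maxn n k) => //; split.
    - by move: x Fnx; exact/subsetPset/ndF/leq_maxl.
    - by move: y Gky; exact/subsetPset/ndF/leq_maxr.
  by move=> [n _ []/= ? ?]; split; exists n.
move=> k; have [? ?] := Foo k.
split; first exact: measurableX.
rewrite /leb2 product_measure1E// lte_mul_pinfty// ?ge0_fin_numE ?measure_ge0 //.
Qed.

HB.instance Definition _ (R : realType) :=
  Measure_isSigmaFinite.Build _ _ _ (@leb2 R) (@leb2_sigma_finite R).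

Theorem mainTheorem8 (R : realType) (T : R) (hT : 0 < T)
  (b : R * R -> R * R)
  (hb_meas : measurable_fun (@Qdom R) b)
  (hb_bdd : exists M : R, forall x, @Qdom R x -> `|(b x).1| <= M /\ `|(b x).2| <= M)
  (hb_BV : BV_torus b)
  (rho : R * (R * R) -> R)
  (hrho : ln_Linfty T rho)
  (hce : continuity_eq T b rho)
  (eta : {finite_measure set (Gamma T) -> \bar R})
  (hconc : exists N : set (Gamma T), measurable N /\ eta N = 0%E /\
             forall g : Gamma T, ~ N g -> integral_curve T b (sval g))
  (hmarg : forall t : R, 0 <= t <= T -> forall B : set (R * R), measurable B ->
             eta (@ev R T t @^-1` B) =
             (\int[@leb2 R]_(x in B `&` @Qdom R) (rho (t, x))%:E)%E)
  (A : set (R * R)) (hA_meas : measurable A) (hA : A `<=` @Qdom R) :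
  @leb2 R A = 0%E <-> eta (@Gamma_A R T A) = 0%E.
Proof.
pose mu := @lebesgue_measure R.
have mS : measurable (Sset R T A : set (measurableTypeR R * Gamma T)) := @Sset_meas R T hT A hA_meas.
have fub := indic_fubini_tonelli mu eta mS.
rewrite (indic_fubini_tonelli_FE eta mS) (indic_fubini_tonelli_GE mu mS) in fub.
have AQ : A `&` @Qdom R = A by rewrite setIidl.
have FE t : (eta \o xsection (Sset R T A)) t =
    if (0 <= t <= T) then (\int[@leb2 R]_(x in A) (rho (t, x))%:E)%E else 0%E.
  rewrite /=; case: ifPn => ht.
    have -> : xsection (Sset R T A) t = ev t @^-1` A.
      by apply/seteqP; split => g; rewrite /xsection /= in_setE /Sset /=; [case|move=> ?; split].
    by rewrite hmarg // AQ.
  have -> : xsection (Sset R T A) t = set0; last exact: measure0.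
  apply/seteqP; split => g //; rewrite /xsection /= in_setE /Sset /= => -[h _].
  by rewrite h in ht.
have GA : @Gamma_A R T A = [set g | (0 < (mu \o ysection (Sset R T A)) g)%E].
  apply/seteqP; split => g; rewrite /Gamma_A /=; congr (_ < mu _)%E;
    by apply/seteqP; split => s; rewrite /ysection /= in_setE.
have mG : measurable_fun setT (mu \o ysection (Sset R T A)) := measurable_fun_ysection mu mS.
have mGA : measurable (@Gamma_A R T A).
  by rewrite GA -[X in measurable X]setTI; exact: emeasurable_fun_o_infty.
split.
- move=> A0.
  have i0 : (\int[eta]_y (mu \o ysection (Sset R T A)) y = 0)%E.
    rewrite -fub; apply: integral0_eq => t _; rewrite FE; case: ifP => // _.
    exact: null_integral.
  have := integral_eq0_pos eta measurableT mG (fun x _ => measure_ge0 _ _) i0.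
  by rewrite setTI -GA.
- move=> GA0.
  have i0 : (\int[eta]_y (mu \o ysection (Sset R T A)) y = 0)%E.
    apply/eqP; rewrite eq_le integral_ge0 ?andbT; last by move=> x _; exact: measure_ge0.
    apply: (le_trans (@le_integral_nomeas _ _ _ eta _ _ ((cst +oo%E) \_ (@Gamma_A R T A)) _ _)).
    + by move=> x _; exact: measure_ge0.
    + move=> x _; rewrite /patch; case: ifPn => [_|hx]; first exact: leey.
      rewrite leNgt; apply/negP => h; move/negP: hx; apply; rewrite inE GA; exact: h.
    rewrite -integral_mkcond integral_cst //.
    have h0 (x : \bar R) : x = 0%E -> (+oo * x <= 0)%E by move=> ->; rewrite mule0.
    exact: h0 GA0.
  rewrite -fub in i0.
  have mF : measurable_fun setT (eta \o xsection (Sset R T A)) := measurable_fun_xsection eta mS.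
  have N1 := integral_eq0_pos mu measurableT mF (fun x _ => measure_ge0 _ _) i0.
  rewrite setTI in N1.
  have [mrho [C hae]] := hrho.
  have [N' [mN' N'0 hN']] := hae.
  have mH : measurable_fun setT (@leb2 R \o xsection N') := measurable_fun_xsection (@leb2 R) mN'.
  have N'0' : (\int[mu]_x (@leb2 R \o xsection N') x = 0)%E := N'0.
  have N2 := integral_eq0_pos mu measurableT mH (fun x _ => measure_ge0 _ _) N'0'.
  rewrite setTI in N2.
  pose F := eta \o xsection (Sset R T A).
  pose H := @leb2 R \o xsection N'.
  have mF' : measurable [set t | (0 < F t)%E].
    by rewrite -[X in measurable X]setTI; exact: emeasurable_fun_o_infty.
  have mH' : measurable [set t | (0 < H t)%E].
    by rewrite -[X in measurable X]setTI; exact: emeasurable_fun_o_infty.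
  have [t [ht [hF hH]]] : exists t, (0 < t < T) /\ ~ (0 < F t)%E /\ ~ (0 < H t)%E.
    apply: contrapT => hne.
    have sub : `]0, T[ `<=` [set t | (0 < F t)%E] `|` [set t | (0 < H t)%E].
      move=> t; rewrite /= in_itv /= => ht.
      apply: contrapT => /not_orP [h1 h2]; apply: hne; exists t; split => //.
    pose I : set R := `]0, T[%classic.
    have : (mu I <= 0)%E.
      have h1 : (mu I <= mu ([set t | (0 < F t)%E] `|` [set t | (0 < H t)%E]))%E.
        by apply: le_measure => //; rewrite inE; [exact: measurable_itv|exact: measurableU].
      apply: (le_trans h1).
      apply: (le_trans (measureU2 _ _ _)) => //.
      have h0 (x y : \bar R) : x = 0%E -> y = 0%E -> (x + y <= 0)%E by move=> -> ->; rewrite adde0.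
      exact: h0 N1 N2.
    rewrite /mu /I lebesgue_measure_itv /= lte_fin hT oppr0 adde0 lee_fin.
    by rewrite leNgt hT.
  have ht' : 0 <= t <= T by case/andP: ht => h1 h2; rewrite (ltW h1) (ltW h2).
  have hI : (\int[@leb2 R]_(x in A) (rho (t, x))%:E = 0)%E.
    rewrite -[LHS](_ : F t = _); last by rewrite /F FE ht'.
    by apply/eqP; rewrite eq_le leNgt; apply/andP; split; [apply/negP|exact: measure_ge0].
  pose Nt := xsection N' t.
  have mNt : measurable Nt := measurable_xsection t mN'.
  have Nt0 : @leb2 R Nt = 0%E.
    by apply/eqP; rewrite eq_le leNgt; apply/andP; split; [apply/negP|exact: measure_ge0].
  have hpos x : A x -> ~ Nt x -> 0 < rho (t, x).
    move=> Ax nN.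
    have : ((`]0%R, T[ `*` @Qdom R) (t, x) -> 0 < rho (t, x) /\ `|ln (rho (t, x))| <= C).
      apply: contrapT => nP; apply: nN; rewrite /Nt /xsection /= in_setE; exact: hN' nP.
    have hD : (`]0%R, T[ `*` @Qdom R) (t, x).
      by split => /=; [rewrite in_itv /=; exact: ht|exact: hA].
    by move=> /(_ hD) [].
  have mQ : measurable (@Qdom R) by apply: measurableX; exact: measurable_itv.
  pose rt := fun x : R * R => (rho (t, x))%:E.
  rewrite -/rt in hI.
  have mrt : measurable_fun A rt.
    apply/measurable_EFinP => mA' B mB.
    have mD : measurable (`]0%R, T[ `*` @Qdom R) by apply: measurableX => //; exact: measurable_itv.
    have := measurable_xsection t (mrho mD B mB).
    move=> /(measurableI _ _ hA_meas); congr measurable.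
    apply/seteqP; split => x /=; rewrite /xsection /= in_setE /=.
      by move=> [Ax [_ Bx]].
    by move=> [Ax Bx]; split => //; split => //; split => //; exact: hA.
  have hneg : (\int[@leb2 R]_(x in A) rt^\- x = 0)%E.
    rewrite (ge0_negligible_integral mNt hA_meas (measurable_funeneg mrt) (fun x _ => funeneg_ge0 _ _) Nt0).
    apply: integral0_eq => x Dx.
    have h0 : forall y, (A `\` Nt) y -> (0 <= rt y)%E.
      by move=> y [Ay nNy]; rewrite lee_fin ltW // hpos.
    exact: (ge0_funenegE h0 (mem_set Dx)).
  have hp : (\int[@leb2 R]_(x in A) rt^\+ x = 0)%E.
    by move: hI; rewrite integralE hneg sube0.
  have P0 := integral_eq0_pos (@leb2 R) hA_meas (measurable_funepos mrt) (fun x _ => funepos_ge0 _ _) hp.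
  have sub : A `<=` (A `&` [set x | (0 < rt^\+ x)%E]) `|` Nt.
    move=> x Ax; have [Nx|nNx] := pselect (Nt x); [by right|left; split => //=].
    by rewrite funeposE lt_max lte_fin hpos.
  have mAP : measurable (A `&` [set x | (0 < rt^\+ x)%E]).
    by apply: emeasurable_fun_o_infty => //; exact: measurable_funepos.
  apply/eqP; rewrite eq_le measure_ge0 andbT.
  have h1 : (@leb2 R A <= @leb2 R ((A `&` [set x | (0 < rt^\+ x)%E]) `|` Nt))%E.
    by apply: le_measure => //; rewrite inE //; apply: measurableU.
  apply: (le_trans h1); apply: (le_trans (measureU2 (@leb2 R) mAP mNt)).
  have h0 (x y : \bar R) : x = 0%E -> y = 0%E -> (x + y <= 0)%E by move=> -> ->; rewrite adde0.
  exact: h0 P0 Nt0.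
Qed.
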